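(* In the generic model, for every rooted forest $w$ the polynomial $\mathcal P(w)\in\mathbb R[x]$ satisfies $$\mathcal P(w)-\frac{(-c_{-1}x)^{|w|}}{w!}\in\mathbb R[x]_{<|w|},$$ i.e. its coefficient of $x^{|w|}$ is $(-c_{-1})^{|w|}/w!$ and it has no higher terms.
   Context: Generic model: $f\colon[0,\infty)\to\mathbb R$ continuous with $f(\zeta)-c/\zeta=O(\zeta^{-1-\epsilon})$ at infinity; Mellin transform $F(z)=\int_0^\infty f(\zeta)\zeta^{-z}d\zeta=\sum_{n\ge-1}c_nz^n$ near $0$. $H_R$ is the Connes–Kreimer Hopf algebra of rooted trees (forests $w$, $|w|$ number of nodes, $w_v$ subtree at node $v$, antipode $S$). $\phi_s(w)=s^{-z|w|}\prod_{v}F(z|w_v|)$ (multiplicative), $\phi_{R,s}=\phi_\mu^{\star-1}\star\phi_s$ for fixed $\mu>0$, and $\mathcal P(w)\in\mathbb R[x]$ is the polynomial with $\lim_{z\to0}\phi_{R,s}(w)=\mathcal P(w)(\ln\frac s\mu)$. Tree factorial: $w!=\prod_{v\in V(w)}|w_v|$. *)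

(* Defs.v *)
From Stdlib Require Import Reals Lra List.
Import ListNotations.
Open Scope R_scope.

Inductive tree : Type := Node : list tree -> tree.
Definition forest := list tree.

Definition prodR (l : list R) : R := fold_right Rmult 1 l.
Definition sumR (l : list R) : R := fold_right Rplus 0 l.

Fixpoint tsize (t : tree) : nat :=
  match t with
  | Node ch =>
      S ((fix fs (l : list tree) : nat :=
            match l with nil => 0%nat | c :: cs => (tsize c + fs cs)%nat end) ch)
  end.
Definition fsize (w : forest) : nat := fold_right (fun t acc => (tsize t + acc)%nat) 0%nat w.

(** tree factorial t! = prod_v |t_v| *)
Fixpoint tfact (t : tree) : nat :=
  match t with
  | Node ch =>
      (tsize (Node ch) *
       (fix fp (l : list tree) : nat :=
          match l with nil => 1%nat | c :: cs => (tfact c * fp cs)%nat end) ch)%nat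
  end.
Definition ffact (w : forest) : nat := fold_right (fun t acc => (tfact t * acc)%nat) 1%nat w.

(** Admissible cuts of a tree: list of pairs (P^C(t), R^C(t)) (pruned forest,
    trunk), including the empty cut (P = [], R = [t]) and the full cut
    (P = [t], R = []).  Hence Delta(t) = sum over this list of P (x) R. *)
Fixpoint tcuts (t : tree) : list (forest * forest) :=
  match t with
  | Node ch =>
      ([Node ch], []) ::
      map (fun pr => (fst pr, [Node (snd pr)]))
        ((fix fc (l : list tree) : list (forest * forest) :=
            match l with
            | nil => [([], [])]
            | c :: cs =>
                flat_map (fun p1 => map (fun p2 => (fst p1 ++ fst p2, snd p1 ++ snd p2)) (fc cs))
                         (tcuts c)
            end) ch)
  end.

(** Coproduct of a forest (multiplicative extension): Delta(w) = sum P (x) R. *)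
Fixpoint fcuts (w : forest) : list (forest * forest) :=
  match w with
  | nil => [([], [])]
  | t :: ts =>
      flat_map (fun p1 => map (fun p2 => (fst p1 ++ fst p2, snd p1 ++ snd p2)) (fcuts ts))
               (tcuts t)
  end.

Definition fchar (g : tree -> R) (w : forest) : R := prodR (map g w).

(** Convolution inverse of a character g (values on trees), defined by the
    recursion (g^{*-1} * g)(t) = 0, i.e.
      g^{*-1}(t) = - sum_{C, R^C(t) <> 1} g^{*-1}(P^C(t)) g(R^C(t)).
    The natural number is fuel (|t| suffices). *)
Fixpoint tinv_fuel (g : tree -> R) (n : nat) (t : tree) : R :=
  match n with
  | O => 0
  | S m =>
      - sumR (map (fun pr =>
                     match snd pr with
                     | nil => 0
                     | _ => fchar (tinv_fuel g m) (fst pr) * fchar g (snd pr)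
                     end) (tcuts t))
  end.
Definition tinv (g : tree -> R) (t : tree) : R := tinv_fuel g (tsize t) t.

Fixpoint Fprod (F : R -> R) (z : R) (t : tree) : R :=
  match t with
  | Node ch =>
      F (z * INR (tsize (Node ch))) *
      (fix fp (l : list tree) : R :=
         match l with nil => 1 | c :: cs => Fprod F z c * fp cs end) ch
  end.
Definition phi (F : R -> R) (s z : R) (t : tree) : R :=
  Rpower s (- (z * INR (tsize t))) * Fprod F z t.

(** phi_{R,s}(w) = (phi_mu^{*-1} * phi_s)(w) *)
Definition phiR (F : R -> R) (mu s z : R) (w : forest) : R :=
  sumR (map (fun pr => fchar (tinv (phi F mu z)) (fst pr) * fchar (phi F s z) (snd pr))
            (fcuts w)).

Definition cont_on_nonneg (f : R -> R) : Prop :=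
  forall x, 0 <= x -> forall eps, 0 < eps ->
    exists delta, 0 < delta /\
      forall y, 0 <= y -> Rabs (y - x) < delta -> Rabs (f y - f x) < eps.

Definition mellin_at (f : R -> R) (z L : R) : Prop :=
  forall eps, 0 < eps ->
    exists A B, 0 < A /\
      forall a b, 0 < a -> a < A -> B < b ->
        exists pr : Riemann_integrable (fun t => f t * Rpower t (- z)) a b,
          Rabs (RiemannInt pr - L) < eps.

(** polynomial with coefficient list P (lowest degree first) evaluated at x *)
Definition peval (P : list R) (x : R) : R := fold_right (fun a acc => a + x * acc) 0 P.

(* Main.v *)
Require Import Defs.
From Stdlib Require Import Reals List Lra Lia Factorial.
Import ListNotations.
Open Scope R_scope.


Lemma sumR_app l1 l2 : sumR (l1 ++ l2) = sumR l1 + sumR l2.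
Proof. induction l1; simpl; [ring| rewrite IHl1; ring]. Qed.

Lemma prodR_app l1 l2 : prodR (l1 ++ l2) = prodR l1 * prodR l2.
Proof. induction l1; simpl; [ring| rewrite IHl1; ring]. Qed.

Lemma fchar_app g l1 l2 : fchar g (l1 ++ l2) = fchar g l1 * fchar g l2.
Proof. unfold fchar. rewrite map_app, prodR_app. ring. Qed.

Lemma fsize_app l1 l2 : fsize (l1 ++ l2) = (fsize l1 + fsize l2)%nat.
Proof. induction l1; simpl; [lia| rewrite IHl1; lia]. Qed.

Lemma sumR_ext {A} (f g : A -> R) l : (forall x, In x l -> f x = g x) ->
  sumR (map f l) = sumR (map g l).
Proof. induction l; simpl; intros H; auto. rewrite H, IHl; auto. Qed.

Lemma sumR_plus {A} (f g : A -> R) l :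
  sumR (map (fun x => f x + g x) l) = sumR (map f l) + sumR (map g l).
Proof. induction l; simpl; [ring| rewrite IHl; ring]. Qed.

Lemma sumR_scal {A} (f : A -> R) k l :
  sumR (map (fun x => k * f x) l) = k * sumR (map f l).
Proof. induction l; simpl; [ring| rewrite IHl; ring]. Qed.

Lemma sumR_opp {A} (f : A -> R) l :
  sumR (map (fun x => - f x) l) = - sumR (map f l).
Proof. induction l; simpl; [ring| rewrite IHl; ring]. Qed.

Lemma sumR_zero {A} (f : A -> R) l : (forall x, In x l -> f x = 0) -> sumR (map f l) = 0.
Proof. induction l; simpl; intros H; auto. rewrite H, IHl; auto. ring. Qed.

Lemma sumR_flat_map {A B} (h : B -> R) (k : A -> list B) l :
  sumR (map h (flat_map k l)) = sumR (map (fun x => sumR (map h (k x))) l).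
Proof. induction l; simpl; auto. rewrite map_app, sumR_app, IHl. ring. Qed.

Lemma sumR_map_map {A B} (h : B -> R) (k : A -> B) l :
  sumR (map h (map k l)) = sumR (map (fun x => h (k x)) l).
Proof. rewrite map_map; auto. Qed.

Lemma sumR_swap {A B} (f : A -> B -> R) l1 l2 :
  sumR (map (fun x => sumR (map (fun y => f x y) l2)) l1) =
  sumR (map (fun y => sumR (map (fun x => f x y) l1)) l2).
Proof.
  induction l1; simpl.
  - symmetry; apply sumR_zero; auto.
  - rewrite IHl1, <- sumR_plus. auto.
Qed.

Lemma sumR_seq_S (f : nat -> R) n : sumR (map f (seq 0 (S n))) = sumR (map f (seq 0 n)) + f n.
Proof. rewrite seq_S, map_app, sumR_app. simpl. ring. Qed.

Lemma sum_f_R0_sumR f n : sum_f_R0 f n = sumR (map f (seq 0 (S n))).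
Proof.
  induction n; [simpl; ring|]. simpl sum_f_R0.
  rewrite IHn, (sumR_seq_S f (S n)). ring.
Qed.

Lemma sumR_single (f : nat -> R) N k : (k <= N)%nat ->
  (forall i, (i <= N)%nat -> i <> k -> f i = 0) ->
  sumR (map f (seq 0 (S N))) = f k.
Proof.
  induction N; intros Hk H.
  - simpl. assert (k = 0%nat) by lia. subst. ring.
  - rewrite sumR_seq_S.
    destruct (Nat.eq_dec k (S N)).
    + subst. rewrite sumR_zero. ring. intros x Hx. apply in_seq in Hx. apply H; lia.
    + rewrite IHN by (try lia; intros; apply H; lia). rewrite (H (S N)) by lia. ring.
Qed.

Fixpoint tree_ind2 (P : tree -> Prop) (H : forall l, Forall P l -> P (Node l)) (t : tree) : P t :=
  match t with
  | Node l => H l ((fix f (l : list tree) : Forall P l :=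
                     match l with
                     | nil => Forall_nil _
                     | c :: cs => Forall_cons _ (tree_ind2 P H c) (f cs)
                     end) l)
  end.

Lemma tsize_Node ch : tsize (Node ch) = S (fsize ch).
Proof. simpl. f_equal. Qed.

Lemma tfact_Node ch : tfact (Node ch) = (S (fsize ch) * ffact ch)%nat.
Proof. change (tsize (Node ch) * ((fix fp (l : list tree) : nat :=
          match l with nil => 1%nat | c :: cs => (tfact c * fp cs)%nat end) ch) = S (fsize ch) * ffact ch)%nat.
  rewrite tsize_Node. f_equal. Qed.

Lemma tcuts_Node ch : tcuts (Node ch) =
  ([Node ch], []) :: map (fun pr => (fst pr, [Node (snd pr)])) (fcuts ch).
Proof. simpl. f_equal. Qed.

Lemma Fprod_Node F z ch : Fprod F z (Node ch) =
  F (z * INR (S (fsize ch))) * prodR (map (Fprod F z) ch).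
Proof. rewrite <- tsize_Node. simpl. f_equal. induction ch; simpl; auto. rewrite IHch; auto. Qed.

Lemma fsize_single t : fsize [t] = tsize t.
Proof. unfold fsize; simpl; lia. Qed.

Lemma tsize_pos t : (1 <= tsize t)%nat.
Proof. destruct t. rewrite tsize_Node. lia. Qed.

Lemma tfact_pos t : (1 <= tfact t)%nat.
Proof.
  induction t using tree_ind2. rewrite tfact_Node.
  assert (1 <= ffact l)%nat.
  { induction H; simpl; auto. nia. }
  nia.
Qed.

Lemma ffact_pos w : (1 <= ffact w)%nat.
Proof. induction w; simpl; auto. pose proof (tfact_pos a). nia. Qed.

Definition prodcuts (l1 l2 : list (forest * forest)) :=
  flat_map (fun p1 => map (fun p2 => (fst p1 ++ fst p2, snd p1 ++ snd p2)) l2) l1.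

Lemma fcuts_cons t ts : fcuts (t :: ts) = prodcuts (tcuts t) (fcuts ts).
Proof. reflexivity. Qed.

Lemma cuts_size :
  forall t, forall c, In c (tcuts t) -> (fsize (fst c) + fsize (snd c) = tsize t)%nat.
Proof.
  assert (HF : forall ch, Forall (fun t => forall c, In c (tcuts t) -> (fsize (fst c) + fsize (snd c) = tsize t)%nat) ch ->
     forall c, In c (fcuts ch) -> (fsize (fst c) + fsize (snd c) = fsize ch)%nat).
  { induction 1 as [|x l Hx Hl IH]; simpl; intros c Hc.
    - destruct Hc as [<-|[]]; simpl; auto.
    - apply in_flat_map in Hc as [p1 [Hp1 Hc]]. apply in_map_iff in Hc as [p2 [<- Hp2]].
      simpl. rewrite !fsize_app. specialize (Hx _ Hp1). specialize (IH _ Hp2). destruct p1, p2; simpl in *; lia. }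
  intro t; induction t using tree_ind2; intros c Hc.
  rewrite tcuts_Node in Hc. destruct Hc as [<-|Hc].
  - cbn [fst snd]. rewrite fsize_single. simpl. lia.
  - apply in_map_iff in Hc as [c' [<- Hc']].
    specialize (HF _ H _ Hc'). destruct c'; cbn [fst snd] in *. rewrite fsize_single, !tsize_Node. lia.
Qed.

Lemma fcuts_size w : forall c, In c (fcuts w) -> (fsize (fst c) + fsize (snd c) = fsize w)%nat.
Proof.
  induction w; simpl; intros c Hc.
  - destruct Hc as [<-|[]]; simpl; auto.
  - apply in_flat_map in Hc as [p1 [Hp1 Hc]]. apply in_map_iff in Hc as [p2 [<- Hp2]].
    simpl. rewrite !fsize_app. specialize (cuts_size _ _ Hp1). specialize (IHw _ Hp2). destruct p1, p2; simpl in *; lia.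
Qed.


Lemma tsize_le_fsize u P : In u P -> (tsize u <= fsize P)%nat.
Proof. induction P; simpl; intros H; [contradiction|]. destruct H as [<-|H]; [lia|]. specialize (IHP H); lia. Qed.

Lemma fsize_nonnil R0 : R0 <> [] -> (1 <= fsize R0)%nat.
Proof. destruct R0; [congruence|]. simpl. pose proof (tsize_pos t). lia. Qed.

Lemma fchar_ext g1 g2 P : (forall u, In u P -> g1 u = g2 u) -> fchar g1 P = fchar g2 P.
Proof. intros H. unfold fchar. f_equal. apply map_ext_in. auto. Qed.

Lemma tinv_fuel_ok g : forall m m' t, (m' <= m)%nat -> (tsize t <= m')%nat ->
  tinv_fuel g m' t = tinv_fuel g (tsize t) t.
Proof.
  induction m; intros m' t Hm Ht.
  - pose proof (tsize_pos t); lia.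
  - destruct m' as [|k]. { pose proof (tsize_pos t); lia. }
    destruct t as [ch]. rewrite tsize_Node in *. cbn [tinv_fuel]. f_equal.
    apply sumR_ext. intros pr Hpr. pose proof (cuts_size _ _ Hpr) as Hs. rewrite tsize_Node in Hs.
    destruct pr as [P R0]. cbn [fst snd] in *.
    destruct R0 eqn:Es; [reflexivity|]. f_equal. apply fchar_ext.
    intros u Hu. 
    pose proof (fsize_nonnil R0) as Hn. rewrite Es in Hn. specialize (Hn ltac:(congruence)).
    pose proof (tsize_le_fsize _ _ Hu).
    rewrite (IHm k u) by lia. rewrite (IHm (fsize ch) u) by lia. reflexivity.
Qed.

Lemma tinv_Node g ch : tinv g (Node ch) =
  - sumR (map (fun c => fchar (tinv g) (fst c) * fchar g [Node (snd c)]) (fcuts ch)).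
Proof.
  unfold tinv at 1. rewrite tsize_Node. cbn [tinv_fuel]. rewrite tcuts_Node.
  cbn [map sumR fold_right snd]. rewrite Rplus_0_l, sumR_map_map. f_equal.
  apply sumR_ext. intros c Hc. pose proof (fcuts_size _ _ Hc). destruct c as [P R0]. cbn [fst snd] in *.
  f_equal. apply fchar_ext.
  intros u Hu. pose proof (tsize_le_fsize _ _ Hu).
  apply (tinv_fuel_ok g (fsize ch)); try lia.
Qed.


Definition lim0 (h : R -> R) (l : R) := limit1_in h (fun z => 0 < z) l 0.

Lemma lim0_const k : lim0 (fun _ => k) k.
Proof. apply (limit_free (fun _ => k) _ 0 0). Qed.

Lemma lim0_id : lim0 (fun z => z) 0.
Proof. apply lim_x. Qed.

Lemma lim0_plus f g l l' : lim0 f l -> lim0 g l' -> lim0 (fun z => f z + g z) (l + l').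
Proof. apply limit_plus. Qed.

Lemma lim0_mult f g l l' : lim0 f l -> lim0 g l' -> lim0 (fun z => f z * g z) (l * l').
Proof. apply limit_mul. Qed.

Lemma lim0_opp f l : lim0 f l -> lim0 (fun z => - f z) (- l).
Proof. apply limit_Ropp. Qed.

Lemma lim0_pow k : lim0 (fun z => z ^ k) (0 ^ k).
Proof.
  induction k; simpl. apply lim0_const. apply lim0_mult; auto. apply lim0_id.
Qed.

Lemma lim0_ext f g l : (exists d, 0 < d /\ forall z, 0 < z < d -> f z = g z) -> lim0 f l -> lim0 g l.
Proof.
  intros [d [Hd H]] Hf eps Heps. destruct (Hf eps Heps) as [alp [Ha Hx]].
  exists (Rmin alp d). split. apply Rmin_pos; lra.
  intros x [Dx Hdx]. simpl in Hdx. unfold Rdist in Hdx. rewrite Rminus_0_r, Rabs_pos_eq in Hdx by lra.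
  assert (x < alp) by (pose proof (Rmin_l alp d); lra).
  assert (x < d) by (pose proof (Rmin_r alp d); lra).
  rewrite <- H by lra. apply Hx. split; auto. simpl. unfold Rdist. rewrite Rminus_0_r, Rabs_pos_eq by lra. auto.
Qed.

Lemma lim0_eq f g l : (forall z, 0 < z -> f z = g z) -> lim0 f l -> lim0 g l.
Proof. intros H. apply lim0_ext. exists 1. split; [lra|]. intros; apply H; lra. Qed.

Lemma lim0_lim_eq f l l' : l = l' -> lim0 f l -> lim0 f l'.
Proof. intros ->; auto. Qed.

Lemma lim0_sumR {A} (h : A -> R -> R) (v : A -> R) l :
  (forall x, In x l -> lim0 (h x) (v x)) ->
  lim0 (fun z => sumR (map (fun x => h x z) l)) (sumR (map v l)).
Proof.
  induction l; simpl; intros H. apply lim0_const.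
  apply lim0_plus; auto.
Qed.

Lemma lim0_bound h l : (exists d C, 0 < d /\ forall z, 0 < z < d -> Rabs (h z - l) <= C * z) -> lim0 h l.
Proof.
  intros [d [C [Hd H]]] eps Heps.
  exists (Rmin d (eps / (Rabs C + 1))). split.
  { apply Rmin_pos; auto. apply Rdiv_lt_0_compat; auto. pose proof (Rabs_pos C); lra. }
  intros x [Dx Hdx]. simpl in *. unfold Rdist in *. rewrite Rminus_0_r, Rabs_pos_eq in Hdx by lra.
  assert (x < d) by (pose proof (Rmin_l d (eps / (Rabs C + 1))); lra).
  assert (x < eps / (Rabs C + 1)) by (pose proof (Rmin_r d (eps / (Rabs C + 1))); lra).
  specialize (H x ltac:(lra)).
  pose proof (Rabs_pos C). pose proof (Rle_abs C).
  apply Rmult_lt_compat_r with (r := Rabs C + 1) in H1; [|lra].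
  unfold Rdiv in H1. rewrite Rmult_assoc, Rinv_l, Rmult_1_r in H1 by lra.
  nra.
Qed.

Lemma sum_le_term (f : nat -> R) N i : (forall n, 0 <= f n) -> (i <= N)%nat -> f i <= sum_f_R0 f N.
Proof.
  intros Hp. induction N; intros Hi.
  - assert (i = 0%nat) by lia. subst. simpl. lra.
  - rewrite tech5. destruct (Nat.eq_dec i (S N)).
    + subst. pose proof (cond_pos_sum f N Hp). lra.
    + pose proof (IHN ltac:(lia)). pose proof (Hp (S N)). lra.
Qed.

Lemma series_terms_bounded (u : nat -> R) S0 : infinite_sum u S0 ->
  exists B, forall m, Rabs (u m) <= B.
Proof.
  intros H. destruct (H 1 ltac:(lra)) as [N HN].
  exists (2 + sum_f_R0 (fun i => Rabs (u i)) N). intros m.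
  pose proof (cond_pos_sum (fun i => Rabs (u i)) N (fun n => Rabs_pos _)).
  destruct (Compare_dec.le_lt_dec m N).
  - pose proof (sum_le_term (fun i => Rabs (u i)) N m (fun n => Rabs_pos _) l). simpl in H1. lra.
  - destruct m. lia.
    pose proof (HN (S m) ltac:(lia)). pose proof (HN m ltac:(lia)).
    rewrite tech5 in H1. unfold Rdist in *.
    replace (u (S m)) with ((sum_f_R0 u m + u (S m) - S0) - (sum_f_R0 u m - S0)) by ring.
    pose proof (Rabs_triang (sum_f_R0 u m + u (S m) - S0) (- (sum_f_R0 u m - S0))).
    rewrite Rabs_Ropp in H3. unfold Rminus at 1. lra.
Qed.

Lemma infinite_sum_le (w : nat -> R) V c M K : infinite_sum w V ->
  (forall n, (K <= n)%nat -> Rabs (sum_f_R0 w n - c) <= M) -> Rabs (V - c) <= M.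
Proof.
  intros H HB. destruct (Rle_lt_dec (Rabs (V - c)) M); auto.
  destruct (H (Rabs (V - c) - M) ltac:(lra)) as [N HN].
  specialize (HN (max N K) ltac:(lia)). specialize (HB (max N K) ltac:(lia)).
  unfold Rdist in HN.
  pose proof (Rabs_triang (sum_f_R0 w (max N K) - c) (V - sum_f_R0 w (max N K))).
  replace (sum_f_R0 w (Init.Nat.max N K) - c + (V - sum_f_R0 w (Init.Nat.max N K))) with (V - c) in H0 by ring.
  rewrite Rabs_minus_sym in HN. lra.
Qed.

Lemma ps_tail (b : nat -> R) x0 B x V K : 0 < x0 -> (forall m, Rabs (b m * x0 ^ m) <= B) ->
  Rabs x <= x0 / 2 -> infinite_sum (fun m => b m * x ^ m) V ->
  Rabs (V - sum_f_R0 (fun m => b m * x ^ m) K) <= 2 * B * (Rabs x / x0) ^ (S K).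
Proof.
  intros Hx0 HB Hx HV. set (q := Rabs x / x0).
  assert (Hq0 : 0 <= q) by (unfold q; apply Rmult_le_pos; [apply Rabs_pos| left; apply Rinv_0_lt_compat; lra]).
  assert (Hq1 : q <= / 2).
  { unfold q. apply Rmult_le_reg_r with x0; auto. unfold Rdiv. rewrite Rmult_assoc, Rinv_l by lra. lra. }
  assert (HB0 : 0 <= B) by (specialize (HB 0%nat); pose proof (Rabs_pos (b 0%nat * x0 ^ 0)); lra).
  assert (Hterm : forall m, Rabs (b m * x ^ m) <= B * q ^ m).
  { intros m. rewrite Rabs_mult, <- RPow_abs.
    replace (Rabs x) with (x0 * q) by (unfold q; field; lra).
    rewrite Rpow_mult_distr. specialize (HB m). rewrite Rabs_mult in HB.
    rewrite <- (Rabs_pos_eq (x0 ^ m)) by (apply pow_le; lra).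
    pose proof (pow_le q m Hq0). nra. }
  apply (infinite_sum_le (fun m => b m * x ^ m) V _ _ K HV).
  intros n Hn. replace n with (K + (n - K))%nat by lia. generalize (n - K)%nat as d. intros d.
  assert (Hd : Rabs (sum_f_R0 (fun m => b m * x ^ m) (K + d) - sum_f_R0 (fun m => b m * x ^ m) K)
     <= 2 * B * q ^ S K * (1 - (/2) ^ d)).
  { induction d.
    - rewrite Nat.add_0_r. unfold Rminus. rewrite Rplus_opp_r, Rabs_R0. simpl. lra.
    - replace (K + S d)%nat with (S (K + d)) by lia. rewrite tech5.
      specialize (Hterm (S (K + d))).
      pose proof (Rabs_triang (sum_f_R0 (fun m : nat => b m * x ^ m) (K + d) - sum_f_R0 (fun m : nat => b m * x ^ m) K) (b (S (K + d)) * x ^ S (K + d))).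
      replace (sum_f_R0 (fun m : nat => b m * x ^ m) (K + d) - sum_f_R0 (fun m : nat => b m * x ^ m) K +
       b (S (K + d)) * x ^ S (K + d)) with (sum_f_R0 (fun m : nat => b m * x ^ m) (K + d) + b (S (K + d)) * x ^ S (K + d) -
       sum_f_R0 (fun m : nat => b m * x ^ m) K) in H by ring.
      assert (q ^ S (K + d) = q ^ S K * q ^ d) by (rewrite <- pow_add; f_equal; lia).
      assert (q ^ d <= (/2) ^ d) by (apply pow_incr; lra).
      assert (0 <= q ^ S K) by (apply pow_le; lra).
      simpl ((/2) ^ S d). rewrite H0 in Hterm.
      assert (B * q ^ S K * q ^ d <= B * q ^ S K * (/2) ^ d) by (apply Rmult_le_compat_l; nra).
      lra. }
  assert (0 <= (/2) ^ d) by (apply pow_le; lra).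
  assert (0 <= q ^ S K) by (apply pow_le; lra).
  assert (0 <= 2 * B * q ^ S K * (/2) ^ d) by (apply Rmult_le_pos; [|lra]; apply Rmult_le_pos; [lra|exact H0]).
  lra.
Qed.

Lemma ps_expand (b : nat -> R) (x0 S0 : R) (D : R -> Prop) (v : R -> R) (K : nat) :
  0 < x0 -> infinite_sum (fun m => b m * x0 ^ m) S0 ->
  (forall x, D x -> infinite_sum (fun m => b m * x ^ m) (v x)) ->
  exists d C (eps : R -> R), 0 < d /\ 0 <= C /\ forall x, D x -> Rabs x < d ->
    v x = sumR (map (fun m => b m * x ^ m) (seq 0 (S K))) + x ^ K * eps x /\
    Rabs (eps x) <= C * Rabs x.
Proof.
  intros Hx0 HS Hv. destruct (series_terms_bounded _ _ HS) as [B HB].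
  assert (HB0 : 0 <= B) by (specialize (HB 0%nat); pose proof (Rabs_pos (b 0%nat * x0 ^ 0)); lra).
  set (C := 2 * B / x0 ^ S K).
  assert (HC : 0 <= C) by (unfold C; apply Rmult_le_pos; [lra| left; apply Rinv_0_lt_compat, pow_lt; lra]).
  set (p := fun x => sumR (map (fun m => b m * x ^ m) (seq 0 (S K)))).
  exists (x0 / 2), C, (fun x => if Req_EM_T x 0 then 0 else (v x - p x) / x ^ K).
  split; [lra|]. split; auto. intros x Dx Hx.
  assert (Ht : Rabs (v x - p x) <= C * Rabs x ^ S K).
  { unfold p. rewrite <- sum_f_R0_sumR.
    pose proof (ps_tail b x0 B x (v x) K Hx0 HB ltac:(lra) (Hv x Dx)).
    unfold C. replace (2 * B / x0 ^ S K * Rabs x ^ S K) with (2 * B * (Rabs x / x0) ^ S K); auto.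
    unfold Rdiv. rewrite Rpow_mult_distr, pow_inv. ring. }
  destruct (Req_EM_T x 0) as [->|Hn].
  - rewrite Rabs_R0 in *. simpl in Ht. rewrite Rmult_0_l, Rmult_0_r in Ht.
    split; [|lra]. assert (v 0 - p 0 = 0).
    { pose proof (Rle_abs (v 0 - p 0)). pose proof (Rle_abs (- (v 0 - p 0))). rewrite Rabs_Ropp in H0. lra. }
    fold (p 0). lra.
  - split.
    + fold (p x). field. apply pow_nonzero; auto.
    + unfold Rdiv. rewrite Rabs_mult, Rabs_inv, <- RPow_abs.
      assert (0 < Rabs x) by (apply Rabs_pos_lt; auto).
      assert (0 < Rabs x ^ K) by (apply pow_lt; auto).
      apply Rmult_le_reg_r with (Rabs x ^ K); auto.
      rewrite Rmult_assoc, Rinv_l by lra. simpl in Ht. nra.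
Qed.


Section Main.
Variables (F : R -> R) (cm1 : R) (a : nat -> R) (r mu : R).
Hypothesis Hr : 0 < r.
Hypothesis Hmu : 0 < mu.
Hypothesis HLaurent : forall z, 0 < z < r -> infinite_sum (fun n => a n * z ^ n) (F z - cm1 / z).

Lemma phi_fchar s z Rs : fchar (phi F s z) Rs = Rpower s (- (z * INR (fsize Rs))) * prodR (map (Fprod F z) Rs).
Proof.
  induction Rs; simpl.
  - rewrite Rmult_0_r, Ropp_0. unfold Rpower. rewrite Rmult_0_l, exp_0. unfold fchar; simpl; ring.
  - unfold fchar in *. simpl. rewrite IHRs. unfold phi.
    rewrite plus_INR. replace (- (z * (INR (tsize a0) + INR (fsize Rs)))) with
      (- (z * INR (tsize a0)) + - (z * INR (fsize Rs))) by ring.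
    rewrite Rpower_plus. ring.
Qed.

Lemma fchar_single g t : fchar g [t] = g t.
Proof. unfold fchar. simpl. ring. Qed.

Lemma fsize_nil_INR : INR (fsize []) = INR 0.
Proof. reflexivity. Qed.

Lemma fchar_nil g : fchar g [] = 1.
Proof. reflexivity. Qed.

Lemma phi_Node z Rs : phi F mu z (Node Rs) =
  Rpower mu (- z) * F (z * INR (S (fsize Rs))) * fchar (phi F mu z) Rs.
Proof.
  unfold phi at 1. rewrite tsize_Node, Fprod_Node, phi_fchar. rewrite S_INR.
  replace (- (z * (INR (fsize Rs) + 1))) with (- z + - (z * INR (fsize Rs))) by ring.
  rewrite Rpower_plus. ring.
Qed.

Lemma phi_s_fchar s z Rs : 0 < s -> fchar (phi F s z) Rs =
   fchar (phi F mu z) Rs * exp (- (z * INR (fsize Rs)) * ln (s / mu)).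
Proof.
  intros Hs. rewrite !phi_fchar.
  replace s with (mu * (s / mu)) at 1 by (field; lra).
  rewrite <- Rpower_mult_distr by (try apply Rdiv_lt_0_compat; lra).
  unfold Rpower at 2. ring.
Qed.

Definition g z := phi F mu z.
Definition T z (c : forest * forest) := fchar (tinv (g z)) (fst c) * fchar (g z) (snd c).
Definition Mom (l : list (forest * forest)) j z := sumR (map (fun c => T z c * INR (fsize (snd c)) ^ j) l).
Definition Dk k (h : R -> R) := exists l, lim0 (fun z => z ^ k * h z) l.

Definition InvL l N d :=
  (forall c, In c l -> Dk N (fun z => T z c)) /\
  exists p : nat -> R, (forall j, lim0 (fun z => z ^ j * Mom l j z) (p j)) /\
    (forall j, (N < j)%nat -> p j = 0) /\ p N = cm1 ^ N * INR (Factorial.fact N) / INR d.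

Lemma lim0_sumR0 {A} (h : A -> R -> R) l :
  (forall x, In x l -> lim0 (h x) 0) ->
  lim0 (fun z => sumR (map (fun x => h x z) l)) 0.
Proof.
  intros H. apply (lim0_lim_eq _ (sumR (map (fun _ : A => 0) l))).
  apply sumR_zero; auto. apply lim0_sumR; auto.
Qed.

Lemma lim0_sumR_ex {A} (h : A -> R -> R) l :
  (forall x, In x l -> exists v, lim0 (h x) v) ->
  exists v, lim0 (fun z => sumR (map (fun x => h x z) l)) v.
Proof.
  induction l; simpl; intros H. exists 0; apply lim0_const.
  destruct (H a0 (or_introl eq_refl)) as [v1 H1]. destruct IHl as [v2 H2]; auto.
  exists (v1 + v2). apply lim0_plus; auto.
Qed.

Lemma Dk_mult k1 k2 f1 f2 : Dk k1 f1 -> Dk k2 f2 -> Dk (k1 + k2) (fun z => f1 z * f2 z).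
Proof.
  intros [l1 H1] [l2 H2]. exists (l1 * l2).
  eapply lim0_eq; [|apply (lim0_mult _ _ _ _ H1 H2)]. intros z _. simpl. rewrite pow_add. ring.
Qed.

Lemma Dk_sum {A} k (h : A -> R -> R) l : (forall x, In x l -> Dk k (h x)) ->
  Dk k (fun z => sumR (map (fun x => h x z) l)).
Proof.
  intros H. destruct (lim0_sumR_ex (fun x z => z ^ k * h x z) l H) as [v Hv].
  exists v. eapply lim0_eq; [|apply Hv]. intros z _. simpl. rewrite <- sumR_scal. auto.
Qed.

Lemma Dk_opp k h : Dk k h -> Dk k (fun z => - h z).
Proof. intros [l H]. exists (-l). eapply lim0_eq; [|apply (lim0_opp _ _ H)]. intros; simpl; ring. Qed.

Lemma Dk_ext k h1 h2 : (forall z, 0 < z -> h1 z = h2 z) -> Dk k h1 -> Dk k h2.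
Proof. intros E [l H]. exists l. eapply lim0_eq; [|apply H]. intros z Hz; simpl; rewrite E; auto. Qed.

Lemma mom_high l N j : (forall c, In c l -> Dk N (fun z => T z c)) -> (N < j)%nat ->
  lim0 (fun z => z ^ j * Mom l j z) 0.
Proof.
  intros HD Hj. unfold Mom.
  eapply lim0_eq with (f := fun z => sumR (map (fun c => z ^ (j - N) * (z ^ N * T z c) * INR (fsize (snd c)) ^ j) l)).
  { intros z _. replace (z ^ j) with (z ^ (j - N) * z ^ N) by (rewrite <- pow_add; f_equal; lia).
    rewrite <- sumR_scal. apply sumR_ext. intros c _. ring. }
  apply lim0_sumR0. intros c Hc. destruct (HD c Hc) as [v Hv].
  apply (lim0_lim_eq _ (0 ^ (j - N) * v * INR (fsize (snd c)) ^ j)).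
  { replace (j - N)%nat with (S (j - N - 1)) by lia. simpl. ring. }
  apply lim0_mult; [|apply lim0_const]. apply lim0_mult; auto. apply lim0_pow.
Qed.

Lemma InvL_nil : InvL [([], [])] 0 1.
Proof.
  split.
  - intros c [<-|[]]. exists 1. eapply lim0_eq; [|apply lim0_const]. intros; unfold T; simpl.
    unfold fchar; simpl. ring.
  - exists (fun j => match j with O => 1 | _ => 0 end). split; [|split].
    + intros j. destruct j.
      * eapply lim0_eq; [|apply lim0_const]. intros. unfold Mom, T, fchar. simpl. ring.
      * eapply lim0_eq; [|apply lim0_const]. intros. unfold Mom, T, fchar. simpl. ring.
    + intros j Hj. destruct j; [lia|auto].
    + simpl. field.
Qed.


Lemma sumR_scal_r {A} (f : A -> R) k l :
  sumR (map (fun x => f x * k) l) = sumR (map f l) * k.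
Proof. induction l; simpl; [ring| rewrite IHl; ring]. Qed.

Lemma T_prod z c1 c2 : T z (fst c1 ++ fst c2, snd c1 ++ snd c2) = T z c1 * T z c2.
Proof. destruct c1, c2. unfold T; cbn [fst snd]; rewrite !fchar_app; ring. Qed.

Lemma Mom_prod l1 l2 j z : Mom (prodcuts l1 l2) j z =
  sumR (map (fun i => C j i * Mom l1 i z * Mom l2 (j - i) z) (seq 0 (S j))).
Proof.
  unfold Mom, prodcuts. rewrite sumR_flat_map.
  transitivity (sumR (map (fun c1 => sumR (map (fun c2 => sumR (map (fun i =>
     C j i * (T z c1 * INR (fsize (snd c1)) ^ i) * (T z c2 * INR (fsize (snd c2)) ^ (j - i))) (seq 0 (S j)))) l2)) l1)).
  { apply sumR_ext; intros c1 _. rewrite sumR_map_map. apply sumR_ext; intros c2 _.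
    rewrite T_prod. destruct c1, c2. cbn [fst snd]. rewrite fsize_app, plus_INR, binomial, sum_f_R0_sumR. rewrite <- sumR_scal.
    apply sumR_ext; intros i _. ring. }
  erewrite sumR_ext; [| intros c1 _; apply sumR_swap]. rewrite sumR_swap.
  apply sumR_ext; intros i _.
  transitivity (sumR (map (fun c1 => (C j i * (T z c1 * INR (fsize (snd c1)) ^ i)) *
     sumR (map (fun c2 => T z c2 * INR (fsize (snd c2)) ^ (j - i)) l2)) l1)).
  { apply sumR_ext; intros c1 _. rewrite <- sumR_scal. apply sumR_ext; intros; ring. }
  rewrite sumR_scal_r, sumR_scal. ring.
Qed.

Lemma InvL_prod l1 l2 N1 N2 d1 d2 : (1 <= d1)%nat -> (1 <= d2)%nat ->
  InvL l1 N1 d1 -> InvL l2 N2 d2 -> InvL (prodcuts l1 l2) (N1 + N2) (d1 * d2).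
Proof.
  intros Hd1 Hd2 [HD1 [p1 [Hl1 [Hz1 Hv1]]]] [HD2 [p2 [Hl2 [Hz2 Hv2]]]]. split.
  - intros c Hc. unfold prodcuts in Hc. apply in_flat_map in Hc as [c1 [Hc1 Hc]].
    apply in_map_iff in Hc as [c2 [<- Hc2]].
    eapply Dk_ext; [intros; symmetry; apply T_prod|]. apply Dk_mult; auto.
  - exists (fun j => sumR (map (fun i => C j i * p1 i * p2 (j - i)%nat) (seq 0 (S j)))). split; [|split].
    + intros j. eapply lim0_eq with (f := fun z => sumR (map (fun i => C j i * (z ^ i * Mom l1 i z) *
          (z ^ (j - i) * Mom l2 (j - i) z)) (seq 0 (S j)))).
      { intros z _. rewrite Mom_prod, <- sumR_scal. apply sumR_ext. intros i Hi. apply in_seq in Hi.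
        replace (z ^ j) with (z ^ i * z ^ (j - i)) by (rewrite <- pow_add; f_equal; lia). ring. }
      apply lim0_sumR. intros i _. apply lim0_mult; [apply lim0_mult; [apply lim0_const|]|]; auto.
    + intros j Hj. apply sumR_zero. intros i Hi. apply in_seq in Hi.
      destruct (Nat.le_gt_cases i N1).
      * rewrite Hz2 by lia. ring.
      * rewrite Hz1 by lia. ring.
    + rewrite (sumR_single _ _ N1).
      * replace (N1 + N2 - N1)%nat with N2 by lia. rewrite Hv1, Hv2. unfold C.
        replace (N1 + N2 - N1)%nat with N2 by lia. rewrite !mult_INR, pow_add.
        assert (INR d1 <> 0) by (apply not_0_INR; lia).
        assert (INR d2 <> 0) by (apply not_0_INR; lia).
        pose proof (INR_fact_neq_0 N1). pose proof (INR_fact_neq_0 N2). field. auto.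
      * lia.
      * intros i Hi Hne. destruct (Nat.le_gt_cases i N1).
        -- rewrite Hz2 by lia. ring.
        -- rewrite Hz1 by lia. ring.
Qed.


Lemma exp_in_exp x : exp_in x (exp x).
Proof. unfold exp. destruct (exist_exp x). simpl. auto. Qed.

Lemma Eexp K : exists d C (eps : R -> R), 0 < d /\ 0 <= C /\ forall x, Rabs x < d ->
  exp x = sumR (map (fun m => / INR (fact m) * x ^ m) (seq 0 (S K))) + x ^ K * eps x /\ Rabs (eps x) <= C * Rabs x.
Proof.
  destruct (ps_expand (fun m => / INR (fact m)) 1 (exp 1) (fun _ => True) exp K) as [d [C [eps [Hd [HC H]]]]].
  - lra.
  - apply exp_in_exp.
  - intros x _. apply exp_in_exp.
  - exists d, C, eps. split; auto.
Qed.

Lemma Gexp K : exists d C (eps : R -> R), 0 < d /\ 0 <= C /\ forall x, 0 < x < d ->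
  F x = cm1 / x + sumR (map (fun m => a m * x ^ m) (seq 0 (S K))) + x ^ K * eps x /\ Rabs (eps x) <= C * x.
Proof.
  destruct (ps_expand a (r / 2) (F (r / 2) - cm1 / (r / 2)) (fun x => 0 < x < r) (fun x => F x - cm1 / x) K)
    as [d [C [eps [Hd [HC H]]]]].
  - lra.
  - apply HLaurent. lra.
  - intros x Hx. apply HLaurent. auto.
  - exists (Rmin d r), C, eps. split; [apply Rmin_pos; lra|]. split; auto.
    intros x Hx. pose proof (Rmin_l d r). pose proof (Rmin_r d r).
    assert (Hax : Rabs x < d) by (rewrite Rabs_pos_eq; lra).
    destruct (H x ltac:(lra) Hax) as [E1 E2].
    rewrite (Rabs_pos_eq x) in E2 by lra. split; auto. lra.
Qed.

Lemma lim0_eps (eps : R -> R) d C k : 0 < d -> 0 < k -> (forall x, 0 < x < d -> Rabs (eps x) <= C * x) ->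
  lim0 (fun z => eps (z * k)) 0.
Proof.
  intros Hd Hk H. apply lim0_bound. exists (d / k), (C * k). split. apply Rdiv_lt_0_compat; auto.
  intros z Hz. rewrite Rminus_0_r.
  assert (z * k < d). { apply Rmult_lt_reg_r with (/ k). apply Rinv_0_lt_compat; auto.
    rewrite Rmult_assoc, Rinv_r by lra. rewrite Rmult_1_r. apply Hz. }
  specialize (H (z * k) ltac:(split; [apply Rmult_lt_0_compat|]; lra)). lra.
Qed.

Lemma lim0_exp k : lim0 (fun z => exp (z * k)) 1.
Proof.
  destruct (Eexp 0) as [d [C [eps [Hd [HC H]]]]]. apply lim0_bound.
  exists (d / (Rabs k + 1)), (C * Rabs k). split.
  { apply Rdiv_lt_0_compat; auto. pose proof (Rabs_pos k); lra. }
  intros z Hz. pose proof (Rabs_pos k).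
  assert (Rabs (z * k) < d).
  { rewrite Rabs_mult, Rabs_pos_eq by lra. destruct Hz as [Hz1 Hz2].
    apply Rmult_lt_compat_r with (r := Rabs k + 1) in Hz2; [|lra].
    unfold Rdiv in Hz2. rewrite Rmult_assoc, Rinv_l, Rmult_1_r in Hz2 by lra. nra. }
  destruct (H _ H1) as [E1 E2]. rewrite E1. simpl. unfold fact; simpl.
  replace (/ 1 * 1 + 0 + 1 * eps (z * k) - 1) with (eps (z * k)) by (field).
  rewrite Rabs_mult, (Rabs_pos_eq z) in E2 by lra. lra.
Qed.

Lemma lim0_Rp : lim0 (fun z => Rpower mu (- z)) 1.
Proof.
  eapply lim0_eq; [|apply (lim0_exp (- ln mu))]. intros z _. unfold Rpower. f_equal. ring.
Qed.

Definition Fz n z := Rpower mu (- z) * F (z * INR (S n)).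

Lemma T_full z ch : T z ([Node ch], []) = tinv (g z) (Node ch).
Proof. unfold T. cbn [fst snd]. rewrite fchar_single, fchar_nil. ring. Qed.

Lemma T_branch z P Rs : T z (P, [Node Rs]) = T z (P, Rs) * Fz (fsize Rs) z.
Proof. unfold T, Fz, g. cbn [fst snd]. rewrite fchar_single, phi_Node. ring. Qed.

Lemma tinv_branch z ch : tinv (g z) (Node ch) = - sumR (map (fun c => T z c * Fz (fsize (snd c)) z) (fcuts ch)).
Proof. rewrite tinv_Node. f_equal. apply sumR_ext. intros [P Rs] _. cbn [fst snd].
  rewrite <- T_branch. reflexivity. Qed.

Lemma Mom_tree ch j z : Mom (tcuts (Node ch)) j z = tinv (g z) (Node ch) * INR 0 ^ j +
  sumR (map (fun c => T z c * Fz (fsize (snd c)) z * INR (S (fsize (snd c))) ^ j) (fcuts ch)).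
Proof.
  unfold Mom. rewrite tcuts_Node.
  change (sumR (map ?f (?x :: ?l))) with (f x + sumR (map f l)).
  cbv beta. rewrite T_full. cbn [snd]. rewrite fsize_nil_INR. f_equal.
  rewrite map_map. apply sumR_ext. intros [P Rs] _. cbn [fst snd].
  rewrite T_branch, fsize_single, tsize_Node. reflexivity.
Qed.


Definition Mplus l i z := sumR (map (fun c => T z c * INR (S (fsize (snd c))) ^ i) l).

Lemma Mplus_binom l i z : Mplus l i z = sumR (map (fun k => C i k * Mom l k z) (seq 0 (S i))).
Proof.
  unfold Mplus, Mom.
  transitivity (sumR (map (fun c => sumR (map (fun k => C i k * (T z c * INR (fsize (snd c)) ^ k)) (seq 0 (S i)))) l)).
  { apply sumR_ext. intros c _. rewrite S_INR, binomial, sum_f_R0_sumR, <- sumR_scal.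
    apply sumR_ext. intros k _. rewrite pow1. ring. }
  rewrite sumR_swap. apply sumR_ext. intros k _. rewrite <- sumR_scal. reflexivity.
Qed.

Lemma C_diag i : C i i = 1.
Proof. unfold C. rewrite Nat.sub_diag. simpl (fact 0). pose proof (INR_fact_neq_0 i). simpl INR. field. auto. Qed.

Lemma Mplus_lim l (p : nat -> R) : (forall j, lim0 (fun z => z ^ j * Mom l j z) (p j)) ->
  forall i, lim0 (fun z => z ^ i * Mplus l i z) (p i).
Proof.
  intros HL i.
  eapply lim0_eq with (f := fun z => sumR (map (fun k => C i k * z ^ (i - k) * (z ^ k * Mom l k z)) (seq 0 (S i)))).
  { intros z _. rewrite Mplus_binom, <- sumR_scal. apply sumR_ext. intros k Hk. apply in_seq in Hk.
    replace (z ^ i) with (z ^ (i - k) * z ^ k) by (rewrite <- pow_add; f_equal; lia). ring. }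
  apply (lim0_lim_eq _ (sumR (map (fun k => C i k * 0 ^ (i - k) * p k) (seq 0 (S i))))).
  { rewrite (sumR_single _ _ i); [| lia |].
    - rewrite Nat.sub_diag, C_diag. simpl. ring.
    - intros k Hk Hne. rewrite pow_i by lia. ring. }
  apply lim0_sumR. intros k _. apply lim0_mult; auto. apply lim0_mult. apply lim0_const. apply lim0_pow.
Qed.

Lemma Dk_Fz n : Dk 1 (Fz n).
Proof.
  destruct (Gexp 0) as [d [C0 [eps [Hd [HC H]]]]].
  assert (Hn : 0 < INR (S n)) by (apply lt_0_INR; lia).
  exists (1 * (cm1 / INR (S n) + 0 * (a 0%nat + 0))).
  eapply lim0_ext with (f := fun z => Rpower mu (- z) * (cm1 / INR (S n) + z * (a 0%nat + eps (z * INR (S n))))).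
  { exists (d / INR (S n)). split. apply Rdiv_lt_0_compat; auto.
    intros z Hz. assert (z * INR (S n) < d).
    { apply Rmult_lt_reg_r with (/ INR (S n)). apply Rinv_0_lt_compat; auto.
      rewrite Rmult_assoc, Rinv_r, Rmult_1_r by lra. apply Hz. }
    destruct (H (z * INR (S n)) ltac:(split; [apply Rmult_lt_0_compat|]; lra)) as [E _].
    unfold Fz. rewrite E. set (k := INR (S n)) in *. simpl. field. split; lra. }
  apply lim0_mult. apply lim0_Rp. apply lim0_plus. apply lim0_const.
  apply lim0_mult. apply lim0_id. apply lim0_plus. apply lim0_const.
  apply (lim0_eps _ d C0); auto. intros x Hx; apply H; auto.
Qed.


Lemma tree_percut z s Tc Rp Fx epsx Sig j' N : z <> 0 -> s <> 0 ->
  Fx = cm1 / (z * s) + Sig + (z * s) ^ (S N) * epsx ->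
  Rp * (cm1 * (z ^ j' * (Tc * s ^ j')) + (z ^ (S j') * Tc * s ^ (S j')) * Sig +
        (z ^ N * Tc) * (z ^ (S (S j')) * s ^ (S j' + S N) * epsx)) =
  z ^ (S j') * (Tc * (Rp * Fx) * s ^ (S j')).
Proof.
  intros Hz Hs ->. rewrite pow_add, Rpow_mult_distr. simpl pow. field. auto.
Qed.

Lemma Sig_lemma z s Tc j' ms : sumR (map (fun m => a m * (z ^ (S j' + m) * (Tc * s ^ (S j' + m)))) ms) =
  (z ^ (S j') * Tc * s ^ (S j')) * sumR (map (fun m => a m * (z * s) ^ m) ms).
Proof.
  rewrite <- sumR_scal. apply sumR_ext. intros m _. rewrite !pow_add, Rpow_mult_distr. ring.
Qed.

Lemma InvL_tree ch d : (1 <= d)%nat -> InvL (fcuts ch) (fsize ch) d ->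
  InvL (tcuts (Node ch)) (S (fsize ch)) (S (fsize ch) * d).
Proof.
  intros Hd [HD [p [HL [HZ HV]]]].
  assert (HDbr : forall c, In c (fcuts ch) -> Dk (S (fsize ch)) (fun z => T z c * Fz (fsize (snd c)) z)).
  { intros c Hc. replace (S (fsize ch)) with (fsize ch + 1)%nat by lia. apply Dk_mult; auto. apply Dk_Fz. }
  split.
  - intros c Hc. rewrite tcuts_Node in Hc. destruct Hc as [<-|Hc].
    + apply (Dk_ext _ (fun z => - sumR (map (fun c => T z c * Fz (fsize (snd c)) z) (fcuts ch)))).
      { intros z _. rewrite T_full, tinv_branch. reflexivity. }
      apply Dk_opp. apply Dk_sum. auto.
    + apply in_map_iff in Hc as [[P Rs] [<- Hc]]. cbn [fst snd].
      apply (Dk_ext _ (fun z => T z (P, Rs) * Fz (fsize Rs) z)).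
      { intros z _. rewrite T_branch. reflexivity. }
      apply (HDbr (P, Rs) Hc).
  - set (N := fsize ch) in *. set (K := S N).
    exists (fun j => match j with O => 0 | S j' => cm1 * p j' +
       sumR (map (fun m => a m * p (S j' + m)%nat) (seq 0 (S K))) end).
    split; [|split].
    + intros j. destruct j as [|j'].
      * apply (lim0_eq (fun _ => 0)); [|apply lim0_const]. intros z _. rewrite Mom_tree, tinv_branch.
        rewrite (sumR_ext (fun c => T z c * Fz (fsize (snd c)) z * INR (S (fsize (snd c))) ^ 0)
                          (fun c => T z c * Fz (fsize (snd c)) z)); [|intros; rewrite pow_O; ring].
        rewrite !pow_O. ring.
      * destruct (Gexp K) as [d0 [C0 [eps [Hd0 [HC0 HG]]]]].
        set (ms := seq 0 (S K)).
        assert (HNp : 0 < INR (S N)) by (apply lt_0_INR; lia).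
        apply lim0_ext with (f := fun z => Rpower mu (- z) *
           (cm1 * (z ^ j' * Mplus (fcuts ch) j' z) +
            sumR (map (fun m => a m * (z ^ (S j' + m) * Mplus (fcuts ch) (S j' + m) z)) ms) +
            sumR (map (fun c => (z ^ N * T z c) * (z ^ (S (S j')) * INR (S (fsize (snd c))) ^ (S j' + K) *
                   eps (z * INR (S (fsize (snd c)))))) (fcuts ch)))).
        { exists (d0 / INR (S N)). split. apply Rdiv_lt_0_compat; auto.
          intros z Hz. rewrite Mom_tree, INR_0, pow_i, Rmult_0_r, Rplus_0_l by lia.
          set (Rp := Rpower mu (- z)).
          transitivity (sumR (map (fun c => Rp * (cm1 * (z ^ j' * (T z c * INR (S (fsize (snd c))) ^ j')) +
              sumR (map (fun m => a m * (z ^ (S j' + m) * (T z c * INR (S (fsize (snd c))) ^ (S j' + m)))) ms) +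
              (z ^ N * T z c) * (z ^ (S (S j')) * INR (S (fsize (snd c))) ^ (S j' + K) *
                   eps (z * INR (S (fsize (snd c))))))) (fcuts ch))).
          { rewrite sumR_scal, !sumR_plus. f_equal. f_equal. f_equal.
            - unfold Mplus. rewrite !sumR_scal. reflexivity.
            - rewrite sumR_swap. apply sumR_ext. intros m _. unfold Mplus. rewrite !sumR_scal. reflexivity. }
          symmetry. rewrite <- sumR_scal. apply sumR_ext. intros c Hc.
          pose proof (fcuts_size _ _ Hc) as Hsz.
          assert (Hs : 0 < INR (S (fsize (snd c)))) by (apply lt_0_INR; lia).
          assert (Hle : INR (S (fsize (snd c))) <= INR (S N)) by (apply le_INR; fold N in Hsz; lia).
          assert (Hx : 0 < z * INR (S (fsize (snd c))) < d0).
          { split. apply Rmult_lt_0_compat; lra.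
            apply Rle_lt_trans with (z * INR (S N)). apply Rmult_le_compat_l; lra.
            apply Rmult_lt_reg_r with (/ INR (S N)). apply Rinv_0_lt_compat; auto.
            rewrite Rmult_assoc, Rinv_r, Rmult_1_r by lra. apply Hz. }
          destruct (HG _ Hx) as [E _].
          rewrite Sig_lemma. unfold Fz. symmetry. apply tree_percut; try lra. exact E. }
        apply (lim0_lim_eq _ (1 * (cm1 * p j' + sumR (map (fun m => a m * p (S j' + m)%nat) ms) + 0))).
        { ring. }
        apply lim0_mult. apply lim0_Rp. apply lim0_plus. apply lim0_plus.
        { apply lim0_mult. apply lim0_const. apply Mplus_lim; auto. }
        { apply lim0_sumR. intros m _. apply lim0_mult. apply lim0_const. apply Mplus_lim; auto. }
        apply lim0_sumR0. intros c Hc. destruct (HD c Hc) as [v Hv].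
        apply (lim0_lim_eq _ (v * (0 ^ (S (S j')) * INR (S (fsize (snd c))) ^ (S j' + K) * 0))). ring.
        apply lim0_mult; auto. apply lim0_mult. apply lim0_mult. apply lim0_pow. apply lim0_const.
        apply (lim0_eps _ d0 C0); auto. apply lt_0_INR; lia. intros x Hx; apply HG; auto.
    + intros j Hj. destruct j as [|j']; [lia|].
      rewrite HZ by lia. rewrite sumR_zero. ring. intros m _. rewrite HZ by lia. ring.
    + unfold K. cbv beta iota. rewrite sumR_zero. rewrite HV, fact_simpl, !mult_INR.
      assert (INR d <> 0) by (apply not_0_INR; lia). pose proof (INR_fact_neq_0 N).
      simpl pow. field. split; auto. apply not_0_INR; lia.
      intros m _. rewrite HZ by lia. ring.
Qed.


Lemma InvL_trees : forall t, InvL (tcuts t) (tsize t) (tfact t).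
Proof.
  intro t. induction t using tree_ind2.
  assert (InvL (fcuts l) (fsize l) (ffact l)).
  { induction H as [|x l Hx Hl IH].
    - exact InvL_nil.
    - rewrite fcuts_cons. apply InvL_prod; auto. apply tfact_pos. apply ffact_pos. }
  rewrite tsize_Node, tfact_Node. apply InvL_tree; auto. apply ffact_pos.
Qed.

Lemma InvL_forest w : InvL (fcuts w) (fsize w) (ffact w).
Proof.
  induction w as [|t ts IH].
  - exact InvL_nil.
  - rewrite fcuts_cons. apply InvL_prod; auto. apply tfact_pos. apply ffact_pos. apply InvL_trees.
Qed.

Lemma lim0_eps2 (eps : R -> R) d C k : 0 < d -> (forall x, Rabs x < d -> Rabs (eps x) <= C * Rabs x) ->
  lim0 (fun z => eps (z * k)) 0.
Proof.
  intros Hd H. apply lim0_bound.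
  exists (d / (Rabs k + 1)), (C * Rabs k). split.
  { apply Rdiv_lt_0_compat; auto. pose proof (Rabs_pos k); lra. }
  intros z Hz. pose proof (Rabs_pos k).
  assert (Rabs (z * k) < d).
  { rewrite Rabs_mult, Rabs_pos_eq by lra. destruct Hz as [Hz1 Hz2].
    apply Rmult_lt_compat_r with (r := Rabs k + 1) in Hz2; [|lra].
    unfold Rdiv in Hz2. rewrite Rmult_assoc, Rinv_l, Rmult_1_r in Hz2 by lra. nra. }
  specialize (H _ H1). rewrite Rminus_0_r. rewrite Rabs_mult, (Rabs_pos_eq z) in H by lra. lra.
Qed.

Lemma peval_map f n x : peval (map f (seq 0 n)) x = sumR (map (fun j => f j * x ^ j) (seq 0 n)).
Proof.
  assert (forall s0, x ^ s0 * peval (map f (seq s0 n)) x = sumR (map (fun j => f j * x ^ j) (seq s0 n))).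
  { induction n; intros s0; simpl. ring. rewrite <- IHn. simpl. ring. }
  rewrite <- H. simpl. ring.
Qed.

Lemma nth_map_seq (f : nat -> R) n k : (k < n)%nat -> nth k (map f (seq 0 n)) 0 = f k.
Proof.
  intros Hk. rewrite (nth_indep _ _ (f 0%nat)) by (rewrite length_map, length_seq; auto).
  rewrite map_nth, seq_nth by auto. reflexivity.
Qed.

Theorem final w : exists P : list R,
    length P = S (fsize w) /\
    nth (fsize w) P 0 = (- cm1) ^ (fsize w) / INR (ffact w) /\
    forall s, 0 < s ->
      limit1_in (fun z => phiR F mu s z w) (fun z => 0 < z) (peval P (ln (s / mu))) 0.
Proof.
  destruct (InvL_forest w) as [HD [p [HL [HZ HV]]]].
  set (N := fsize w) in *.
  exists (map (fun m => / INR (fact m) * (-1) ^ m * p m) (seq 0 (S N))).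
  split; [|split].
  - rewrite length_map, length_seq. reflexivity.
  - rewrite nth_map_seq by lia. rewrite HV.
    replace (- cm1) with ((-1) * cm1) by ring. rewrite Rpow_mult_distr.
    pose proof (INR_fact_neq_0 N). assert (INR (ffact w) <> 0) by (apply not_0_INR; pose proof (ffact_pos w); lia).
    field. auto.
  - intros s Hs. set (L := ln (s / mu)).
    destruct (Eexp N) as [d0 [C0 [eps [Hd0 [HC0 HE]]]]].
    change (lim0 (fun z => phiR F mu s z w) (peval (map (fun m => / INR (fact m) * (-1) ^ m * p m) (seq 0 (S N))) L)).
    rewrite peval_map.
    apply (lim0_lim_eq _ (sumR (map (fun m => (/ INR (fact m) * (- L) ^ m) * p m) (seq 0 (S N))) +
                          sumR (map (fun c : forest * forest => 0) (fcuts w)))).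
    { rewrite (sumR_zero (fun _ => 0)) by auto. rewrite Rplus_0_r. apply sumR_ext. intros m _.
      replace (- L) with ((-1) * L) by ring. rewrite Rpow_mult_distr. ring. }
    apply lim0_ext with (f := fun z =>
       sumR (map (fun m => (/ INR (fact m) * (- L) ^ m) * (z ^ m * Mom (fcuts w) m z)) (seq 0 (S N))) +
       sumR (map (fun c => (z ^ N * T z c) * ((- (INR (fsize (snd c))) * L) ^ N *
                     eps (z * (- (INR (fsize (snd c))) * L)))) (fcuts w))).
    2:{ apply lim0_plus.
        - apply lim0_sumR. intros m _. apply lim0_mult; auto. apply lim0_const.
        - apply lim0_sumR. intros c Hc. destruct (HD c Hc) as [v Hv].
          apply (lim0_lim_eq _ (v * ((- (INR (fsize (snd c))) * L) ^ N * 0))). ring.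
          apply lim0_mult; auto. apply lim0_mult. apply lim0_const.
          apply (lim0_eps2 _ d0 C0); auto. intros x Hx; apply HE; auto. }
    exists (d0 / (INR N * Rabs L + 1)). split.
    { apply Rdiv_lt_0_compat; auto. pose proof (pos_INR N). pose proof (Rabs_pos L). nra. }
    intros z Hz. unfold phiR.
    transitivity (sumR (map (fun c => sumR (map (fun m => (/ INR (fact m) * (- L) ^ m) *
         (z ^ m * (T z c * INR (fsize (snd c)) ^ m))) (seq 0 (S N))) +
         (z ^ N * T z c) * ((- (INR (fsize (snd c))) * L) ^ N * eps (z * (- (INR (fsize (snd c))) * L))))
         (fcuts w))).
    { rewrite sumR_plus. f_equal. rewrite sumR_swap. apply sumR_ext. intros m _. unfold Mom.
      rewrite <- !sumR_scal. apply sumR_ext. intros; ring. }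
    apply sumR_ext. intros c Hc.
    pose proof (fcuts_size _ _ Hc) as Hsz.
    set (n := INR (fsize (snd c))).
    assert (Hn : 0 <= n <= INR N) by (split; [apply pos_INR| apply le_INR; fold N in Hsz; lia]).
    assert (Hx : Rabs (z * (- n * L)) < d0).
    { rewrite Rabs_mult, (Rabs_pos_eq z) by lra. rewrite Rabs_mult, Rabs_Ropp, (Rabs_pos_eq n) by lra.
      pose proof (Rabs_pos L). destruct Hz as [Hz1 Hz2].
      assert (0 < INR N * Rabs L + 1) by nra.
      apply Rmult_lt_compat_r with (r := INR N * Rabs L + 1) in Hz2; auto.
      unfold Rdiv in Hz2. rewrite Rmult_assoc, Rinv_l, Rmult_1_r in Hz2 by lra.
      assert (n * Rabs L <= INR N * Rabs L) by (apply Rmult_le_compat_r; lra). nra. }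
    destruct (HE _ Hx) as [E _].
    unfold T, g. rewrite (phi_s_fchar s z) by auto. fold L. fold n.
    replace (- (z * n) * L) with (z * (- n * L)) by ring. rewrite E.
    set (A := fchar (tinv (phi F mu z)) (fst c)). set (B := fchar (phi F mu z) (snd c)).
    assert (Hsum : sumR (map (fun m => / INR (fact m) * (- L) ^ m * (z ^ m * (A * B * n ^ m))) (seq 0 (S N))) =
       (A * B) * sumR (map (fun m => / INR (fact m) * (z * (- n * L)) ^ m) (seq 0 (S N)))).
    { rewrite <- sumR_scal. apply sumR_ext. intros m _.
      replace (- n * L) with (n * (- L)) by ring. rewrite !Rpow_mult_distr. ring. }
    rewrite Hsum. rewrite (Rpow_mult_distr z). ring.
Qed.

End Main.


Theorem mainTheorem8
  (f F : R -> R) (c : R)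
  (Hcont : cont_on_nonneg f)
  (Hasym : exists eps K M, 0 < eps /\ 0 < M /\
             forall t, M <= t -> Rabs (f t - c / t) <= K * Rpower t (- 1 - eps))
  (HF : forall z, 0 < z < 1 -> mellin_at f z (F z))
  (cm1 : R) (a : nat -> R) (r : R) (Hr : 0 < r)
  (HLaurent : forall z, 0 < z < r -> infinite_sum (fun n => a n * z ^ n) (F z - cm1 / z))
  (mu : R) (Hmu : 0 < mu)
  (w : forest) :
  exists P : list R,
    length P = S (fsize w) /\
    nth (fsize w) P 0 = (- cm1) ^ (fsize w) / INR (ffact w) /\
    forall s, 0 < s ->
      limit1_in (fun z => phiR F mu s z w) (fun z => 0 < z) (peval P (ln (s / mu))) 0.
Proof.
  apply (final F cm1 a r mu Hr Hmu HLaurent w).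
Qed.
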